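(* For every integer $k$ and every integer $n\geq 1$, \[ b_{n}^{(k)}(x+1)-b_{n}^{(k)}(x)=\sum_{p=1}^{n}\sum_{m=1}^{p}\binom{n}{p}\frac{(-1)^{m+p}\,m!}{m^{k}}S_{2}(p,m)\,b_{n-p}(x). \]
   Context: For $k\in\mathbb{Z}$, the polylogarithm is $Li_k(x)=\sum_{n=1}^{\infty}\frac{x^n}{n^k}$. The poly-Bernoulli polynomials of the second kind $b_n^{(k)}(x)$ are defined by the generating function \[ \frac{Li_{k}(1-e^{-t})}{\log(1+t)}(1+t)^{x}=\sum_{n=0}^{\infty}b_{n}^{(k)}(x)\frac{t^{n}}{n!}. \] The Bernoulli polynomials of the second kind $b_n(x)$ are defined by $\frac{t}{\log(1+t)}(1+t)^x=\sum_{n=0}^{\infty}b_n(x)\frac{t^n}{n!}$. $S_2(n,l)$ denotes the Stirling numbers of the second kind, defined by $x^n=\sum_{l=0}^{n}S_2(n,l)(x)_l$, where $(x)_l=x(x-1)\cdots(x-l+1)$. *)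

(* Defs.v *)
(* Formal power series are coefficient sequences nat -> R
   over a numFieldType R (characteristic 0, so n! is invertible). *)
From mathcomp Require Import all_boot all_order all_algebra.
Set Implicit Arguments. Unset Strict Implicit. Unset Printing Implicit Defensive.
Import Order.TTheory GRing.Theory Num.Theory.
Local Open Scope ring_scope.

Section FPS.
Variable R : numFieldType.

Definition fps := nat -> R.

Definition fps_one : fps := fun n => if n is 0%N then 1 else 0.

Definition fps_mul (a b : fps) : fps :=
  fun n => \sum_(i < n.+1) a i * b (n - i)%N.

Definition fps_exp (a : fps) (m : nat) : fps := iter m (fps_mul a) fps_one.

(* Multiplicative inverse of a series with constant term 1:
   c_0 = 1, c_n = - sum_{i=1}^n a_i c_{n-i}. *)
Fixpoint fps_inv_seq (a : fps) (n : nat) : seq R :=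
  match n with
  | 0%N => [:: 1]
  | n'.+1 => let s := fps_inv_seq a n' in
             rcons s (- \sum_(i < n'.+1) a i.+1 * nth 0 s (n' - i)%N)
  end.
Definition fps_inv (a : fps) : fps := fun n => nth 0 (fps_inv_seq a n) n.

Definition one_minus_exp_neg : fps :=
  fun n => if n is 0%N then 0 else (-1) ^+ n.+1 / (n`!)%:R.

Definition log1p_div_t : fps := fun n => (-1) ^+ n / (n.+1)%:R.

Definition t_div_log1p : fps := fps_inv log1p_div_t.

Definition binom_series (x : R) : fps :=
  fun j => (\prod_(i < j) (x - i%:R)) / (j`!)%:R.

(* Li_k(1 - e^{-t}) = sum_{m>=1} (1-e^{-t})^m / m^k ; the coefficient of t^n
   only involves m <= n since (1-e^{-t})^m = O(t^m). *)
Definition polylog_1me (k : int) : fps :=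
  fun n => \sum_(1 <= m < n.+1) fps_exp one_minus_exp_neg m n / (m%:R ^ k).

(* Li_k(1-e^{-t}) / t  (Li_k(1-e^{-t}) has zero constant term) *)
Definition polylog_1me_div_t (k : int) : fps := fun n => polylog_1me k n.+1.

Definition bern2 (n : nat) (x : R) : R :=
  (n`!)%:R * fps_mul t_div_log1p (binom_series x) n.

(* Poly-Bernoulli polynomials of the second kind:
   Li_k(1-e^{-t})/log(1+t) (1+t)^x
     = (Li_k(1-e^{-t})/t) * (t/log(1+t)) * (1+t)^x
     = sum_n b_n^(k)(x) t^n/n! *)
Definition poly_bern2 (k : int) (n : nat) (x : R) : R :=
  (n`!)%:R *
  fps_mul (fps_mul (polylog_1me_div_t k) t_div_log1p) (binom_series x) n.

End FPS.

(* Stirling numbers of the second kind (standard recurrence, equivalent to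
   x^n = sum_l S2(n,l) (x)_l). *)
Fixpoint stirling2 (n m : nat) : nat :=
  match n, m with
  | 0, 0 => 1
  | 0, _.+1 => 0
  | _.+1, 0 => 0
  | n'.+1, m'.+1 => (m'.+1 * stirling2 n' m'.+1 + stirling2 n' m')%N
  end.

(* Main.v *)
Require Import Defs.
From mathcomp Require Import all_boot all_order all_algebra.
From mathcomp Require Import ring.
Import Order.TTheory GRing.Theory Num.Theory.
Local Open Scope ring_scope.

Section S.
Variable R : numFieldType.
Implicit Types a b c : fps R.

Definition tp (a : fps R) (n : nat) : {poly R} := \poly_(i < n.+1) a i.

Lemma coef_tp a n i : (i <= n)%N -> (tp a n)`_i = a i.
Proof. by move=> h; rewrite /tp coef_poly ltnS h. Qed.

Lemma mul_coef (P Q : {poly R}) a b n :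
  (forall i, (i <= n)%N -> P`_i = a i) ->
  (forall i, (i <= n)%N -> Q`_i = b i) ->
  (P * Q)`_n = fps_mul a b n.
Proof.
move=> hP hQ; rewrite coefM /fps_mul.
apply: eq_bigr => i _.
rewrite hP; last by rewrite -ltnS ltn_ord.
by rewrite hQ // leq_subr.
Qed.

Lemma mul_coefs (P Q : {poly R}) a b n :
  (forall i, (i <= n)%N -> P`_i = a i) ->
  (forall i, (i <= n)%N -> Q`_i = b i) ->
  forall j, (j <= n)%N -> (P * Q)`_j = fps_mul a b j.
Proof.
move=> hP hQ j hj; apply: mul_coef => i hi.
  by apply: hP; apply: leq_trans hj.
by apply: hQ; apply: leq_trans hj.
Qed.

Lemma fps_mulA a b c n :
  fps_mul (fps_mul a b) c n = fps_mul a (fps_mul b c) n.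
Proof.
rewrite -(@mul_coef (tp a n * tp b n) (tp c n)); last 2 first.
- by apply: mul_coefs => i hi; rewrite coef_tp.
- by move=> i hi; rewrite coef_tp.
rewrite -mulrA; apply: mul_coef.
- by move=> i hi; rewrite coef_tp.
- by apply: mul_coefs => i hi; rewrite coef_tp.
Qed.

Lemma agree_mulr (P P' Q : {poly R}) p :
  (forall i, (i <= p)%N -> P`_i = P'`_i) -> (P * Q)`_p = (P' * Q)`_p.
Proof.
move=> h; rewrite !coefM; apply: eq_bigr => i _.
by rewrite h // -ltnS ltn_ord.
Qed.

Definition f := one_minus_exp_neg R.

Lemma exp_coef m N p : (p <= N)%N -> fps_exp f m p = ((tp f N) ^+ m)`_p.
Proof.
elim: m p => [|m IH] p hp.
  by rewrite expr0 coef1 /fps_exp /= /fps_one; case: p {hp}.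
rewrite exprS /fps_exp iterS -/(fps_exp f m); symmetry; apply: mul_coef.
  by move=> i hi; rewrite coef_tp // (leq_trans hi hp).
by move=> i hi; rewrite IH // (leq_trans hi hp).
Qed.

Lemma fact_neq0 n : (n`!)%:R != 0 :> R.
Proof. by rewrite pnatr_eq0 -lt0n fact_gt0. Qed.

Lemma deriv_f i : (i.+1)%:R * f i.+1 = (i == 0)%:R - f i.
Proof.
rewrite /f /one_minus_exp_neg; case: i => [|i].
  by rewrite /= expr2 mulrN1 opprK subr0 mul1r factS muln1 divr1.
rewrite sub0r /= factS natrM invfM.
have h := fact_neq0 i.+1.
have h2 : (i.+2)%:R != 0 :> R by rewrite pnatr_eq0.
have h3 : 2 + i%:R != 0 :> R by rewrite -(natrD R 2 i) pnatr_eq0.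
rewrite !exprS; field; by rewrite h h3.
Qed.

Lemma exp_rec m p :
  (p.+1)%:R * fps_exp f m.+1 p.+1 =
  (m.+1)%:R * (fps_exp f m p - fps_exp f m.+1 p).
Proof.
rewrite !(@exp_coef _ p.+1) //.
have -> : (p.+1)%:R * ((tp f p.+1) ^+ m.+1)`_p.+1 =
          (((tp f p.+1) ^+ m.+1)^`())`_p by rewrite coef_deriv mulr_natl.
rewrite deriv_exp /= coefMn mulr_natl; congr (_ *+ _).
rewrite (@agree_mulr _ (1 - tp f p.+1)); last first.
  move=> i hi; rewrite coef_deriv coefB coef1 coef_tp ?ltnS // coef_tp.
    by rewrite -deriv_f mulr_natl.
  by apply: (leq_trans hi); apply: leqnSn.
by rewrite mulrBl mul1r coefB exprS.
Qed.

Lemma stirling p m :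
  (p`!)%:R * fps_exp f m p = (-1) ^+ (m + p) * (m`!)%:R * (stirling2 p m)%:R.
Proof.
elim: p m => [|p IH] m.
  case: m => [|m].
    by rewrite /fps_exp /= /fps_one /= !mulr1.
  rewrite /fps_exp iterS /fps_mul big_ord1 /f /one_minus_exp_neg /=.
  by rewrite mul0r !mulr0.
case: m => [|m].
  by rewrite /fps_exp /= /fps_one /= !mulr0.
have h1 := IH m; have h2 := IH m.+1.
rewrite factS natrM mulrAC exp_rec.
transitivity ((m.+1)%:R * ((p`!%:R * fps_exp f m p) -
   (p`!%:R * fps_exp f m.+1 p))); first by ring.
rewrite h1 h2 [stirling2 p.+1 m.+1]/=.
rewrite natrD natrM factS natrM !addSn !addnS !exprS.
ring.
Qed.

Lemma binom_step (x : R) j :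
  binom_series (x + 1) j.+1 - binom_series x j.+1 = binom_series x j.
Proof.
rewrite /binom_series big_ord_recl big_ord_recr /=.
have -> : \prod_(i < j) (x + 1 - (bump 0 i)%:R) = \prod_(i < j) (x - i%:R).
  by apply: eq_bigr => i _; rewrite /bump /= add1n -addn1 natrD; ring.
rewrite factS natrM invfM.
have h := fact_neq0 j.
have h2 : (j.+1)%:R != 0 :> R by rewrite pnatr_eq0.
set Q := \prod_(i < j) (x - i%:R).
have h3 : 1 + j%:R != 0 :> R by rewrite -(natrD R 1 j) pnatr_eq0.
rewrite subr0; field; by rewrite h h3.
Qed.
End S.

Theorem theorem3 (R : numFieldType) (k : int) (n : nat) (x : R) :
  (1 <= n)%N ->
  poly_bern2 k n (x + 1) - poly_bern2 k n x =
  \sum_(1 <= p < n.+1) \sum_(1 <= m < p.+1)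
     ('C(n, p))%:R * ((-1) ^+ (m + p) * (m`!)%:R / (m%:R ^ k))
       * (stirling2 p m)%:R * bern2 (n - p)%N x.
Proof.
case: n => [//|n] _.
set A := fps_mul (polylog_1me_div_t R k) (t_div_log1p R).
set B := binom_series x.
have step : fps_mul A (binom_series (x + 1)) n.+1 - fps_mul A B n.+1 =
            fps_mul A B n.
  rewrite /fps_mul -sumrB big_ord_recr /= subnn.
  have -> : binom_series (x + 1) 0 = B 0 by rewrite /B /binom_series !big_ord0.
  rewrite subrr addr0; apply: eq_bigr => i _.
  by rewrite -mulrBr /= subSn ?binom_step // -ltnS ltn_ord.
rewrite /poly_bern2 -/A -mulrBr step /A fps_mulA.
rewrite {1}/fps_mul mulr_sumr big_add1 big_mkord.
apply: eq_bigr => i _.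
rewrite /polylog_1me_div_t /polylog_1me mulr_suml mulr_sumr.
apply: eq_bigr => m hm.
have hs := stirling R i.+1 m.
have hb := bin_fact (ltn_ord i : (i < n.+1)%N).
rewrite subSS in hb.
rewrite /f in hs.
rewrite subSS /bern2 -hb 2!natrM.
transitivity (('C(n.+1, i.+1))%:R * ((i.+1)`!%:R * fps_exp (one_minus_exp_neg R) m i.+1) *
   (n - i)`!%:R * fps_mul (t_div_log1p R) B (n - i)%N / (m%:R ^ k)); first by ring.
rewrite hs; ring.
Qed.
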